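(* Let $d\geq 2$ be an integer. For integers $a \le b$ write $[[a,b]] = \{a,a+1,\ldots,b\}$. Let $(R_m)_{m \geq 0}$ be a sequence of boxes $R_m = [[0,x_{1,m}]] \times \cdots \times [[0,x_{d,m}]] \subset \mathbb{Z}^d$ with $R_0 = \{(0,\ldots,0)\}$ (i.e. $x_{k,0}=0$ for all $k$), such that for every $m \geq 1$ and every $k \in \{1,\ldots,d\}$ one has $x_{k,m} \geq x_{k,m-1}$, with strict inequality if and only if $k \equiv m \pmod d$. For $m \geq 1$ let $s(m) \in \{1,\ldots,d\}$ be the residue class of $m$ modulo $d$. A (complete) line in $R_m$ in the $s(m)$-direction is a set of the form $\{(i_1,\ldots,i_{s(m)-1}, j, i_{s(m)+1},\ldots,i_d) : j \in [[0,x_{s(m),m}]]\}$ with $i_r \in [[0,x_{r,m}]]$ fixed for $r \neq s(m)$. For each $m \geq 1$ let $A_m > 1$ and let $\mathcal{L}(m)$ be a set of complete lines in $R_m$ in the $s(m)$-direction whose cardinality is at least $(1 - 1/A_m)$ times the number of all complete lines in $R_m$ in the $s(m)$-direction. If $M_0 \in \mathbb{N}$ satisfies $\sum_{m=1}^{M_0} 1/A_m < 1$, then there exists a sequence of lines $L_m \in \mathcal{L}(m)$, $m \in \{1,\ldots,M_0\}$, such that $L_{m+1} \cap L_m \neq \emptyset$ for every $m \in \{1,\ldots,M_0-1\}$. *)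

(* Defs.v *)
From mathcomp Require Import all_boot all_order all_algebra.
Set Implicit Arguments. Unset Strict Implicit. Unset Printing Implicit Defensive.

(* Points of Z^d (in fact of N^d, all boxes lie in N^d); coordinate k of the
   paper (k in {1..d}) is the ordinal k-1 : 'I_d. *)
Definition point (d : nat) := {ffun 'I_d -> nat}.

(* s(m) - 1 : the 0-based index of the direction at step m >= 1,
   i.e. the ordinal k with k+1 = m mod d. *)
Definition sdir (d m : nat) : nat := (m.-1 %% d)%N.

(* A complete line in R_m in direction s(m) is encoded by its base point i:
   its coordinates i r (r != s(m)) are the fixed coordinates in [[0, x_{r,m}]],
   and the s(m)-coordinate of the base point is normalized to 0.  This gives a
   bijection between such base points and complete lines. *)
Definition is_line (d : nat) (x : 'I_d -> nat -> nat) (m : nat) (i : point d) : bool :=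
  [forall r : 'I_d, if nat_of_ord r == sdir d m then i r == 0%N else (i r <= x r m)%N].

Definition on_line (d : nat) (x : 'I_d -> nat -> nat) (m : nat) (i p : point d) : bool :=
  [forall r : 'I_d, if nat_of_ord r == sdir d m then (p r <= x r m)%N else p r == i r].

Definition nb_lines (d : nat) (x : 'I_d -> nat -> nat) (m : nat) : nat :=
  (\prod_(r < d | nat_of_ord r != sdir d m) (x r m).+1)%N.

(* Main.v *)
Require Import Defs.
From mathcomp Require Import all_boot all_order all_algebra.
From mathcomp Require Import zify ring lra.
Import Order.TTheory GRing.Theory Num.Theory.
Local Open Scope ring_scope.

Lemma card_le_ord (N a : nat) : (a < N)%N -> #|[set j : 'I_N | (j <= a)%N]| = a.+1.
Proof.
move=> hw.
have inj : injective (widen_ord hw) by move=> u v /(congr1 val) /= /val_inj.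
rewrite -[a.+1]card_ord -cardsT -(card_imset _ inj).
apply: eq_card => j; rewrite inE; apply/idP/imsetP.
  move=> hj; exists (Ordinal (hj : (j < a.+1)%N)); first by rewrite inE.
  by apply/val_inj.
by case=> k _ ->; rewrite /= -ltnS.
Qed.

Lemma sdir_ne (d m : nat) : (2 <= d)%N -> (1 <= m)%N -> sdir d m != sdir d m.+1.
Proof.
move=> hd hm; rewrite /sdir /=.
case: m hm => // m _ /=.
apply/eqP=> h.
have : (m.+1 %% d == m %% d)%N by rewrite h.
rewrite -addn1 -modnDml.
have hlt := ltn_pmod m (ltnW hd).
case: (ltngtP (m %% d).+1 d) => h2.
- by rewrite addn1 modn_small // eqn_leq ltnn.
- lia.
- rewrite addn1 h2 modnn => /eqP h3. lia.
Qed.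

Lemma x_step (d : nat) (x : 'I_d -> nat -> nat)
  (hxmono : forall (m : nat) (k : 'I_d), (1 <= m)%N -> (x k m.-1 <= x k m)%N)
  (hxstrict : forall (m : nat) (k : 'I_d), (1 <= m)%N ->
     ((x k m.-1 < x k m)%N <-> (k.+1 = m %[mod d])%N))
  (m : nat) (k : 'I_d) : nat_of_ord k != sdir d m.+1 -> x k m.+1 = x k m.
Proof.
move=> hk; have h1 := hxmono m.+1 k isT; move: h1; rewrite leq_eqVlt => /orP[/eqP->//|].
move/(hxstrict m.+1 k isT) => /eqP; rewrite -addn1 -[m.+1]addn1 eqn_modDr.
rewrite modn_small // => /eqP hkm; move: hk; by rewrite /sdir /= hkm eqxx.
Qed.

Lemma x_mono (d : nat) (x : 'I_d -> nat -> nat)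
  (hxmono : forall (m : nat) (k : 'I_d), (1 <= m)%N -> (x k m.-1 <= x k m)%N)
  (k : 'I_d) (m M : nat) : (m <= M)%N -> (x k m <= x k M)%N.
Proof.
elim: M => [|M IH]; first by rewrite leqn0 => /eqP->.
rewrite leq_eqVlt => /orP[/eqP->//|]; rewrite ltnS => /IH h.
exact: (leq_trans h (hxmono M.+1 k isT)).
Qed.

Theorem lemma2p3 (R : realFieldType) (d : nat) (hd : (2 <= d)%N)
  (x : 'I_d -> nat -> nat)
  (hx0 : forall k : 'I_d, x k 0%N = 0%N)
  (hxmono : forall (m : nat) (k : 'I_d), (1 <= m)%N -> (x k m.-1 <= x k m)%N)
  (hxstrict : forall (m : nat) (k : 'I_d), (1 <= m)%N ->
     ((x k m.-1 < x k m)%N <-> (k.+1 = m %[mod d])%N))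
  (A : nat -> R) (hA : forall m : nat, (1 <= m)%N -> 1 < A m)
  (Ls : nat -> seq (point d))
  (hLuniq : forall m : nat, (1 <= m)%N -> uniq (Ls m))
  (hLlines : forall m : nat, (1 <= m)%N -> all (is_line x m) (Ls m))
  (hLcard : forall m : nat, (1 <= m)%N ->
     (1 - (A m)^-1) * (nb_lines x m)%:R <= (size (Ls m))%:R :> R)
  (M0 : nat)
  (hsum : \sum_(1 <= m < M0.+1) (A m)^-1 < 1 :> R) :
  exists L : nat -> point d,
    (forall m : nat, (1 <= m <= M0)%N -> L m \in Ls m) /\
    (forall m : nat, (1 <= m)%N -> (m < M0)%N ->
       exists p : point d, on_line x m.+1 (L m.+1) p && on_line x m (L m) p).
Proof.
have d0 : (0 < d)%N by apply: ltnW.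
pose s m : 'I_d := Ordinal (ltn_pmod m.-1 d0).
have es : forall m (r : 'I_d), (nat_of_ord r == sdir d m) = (r == s m) by [].
have hsn : forall m, (1 <= m)%N -> (s m == s m.+1) = false.
  by move=> m hm; apply/negbTE; exact: (sdir_ne _ _ hd hm).
pose K := (\max_(k < d) x k M0)%N.
pose N := K.+1.
have hxN : forall m k, (m <= M0)%N -> (x k m < N)%N.
  move=> m k hm; rewrite ltnS; apply: leq_trans (x_mono _ _ hxmono k _ _ hm) _.
  by rewrite /K; apply: (@leq_bigmax _ (fun k => x k M0) k).
pose F := {ffun 'I_d -> 'I_N}.
pose toP (f : F) : point d := [ffun r => nat_of_ord (f r)].
have toP_inj : injective toP.
  move=> f g /ffunP h; apply/ffunP=> r; apply/val_inj; have := h r; by rewrite !ffunE.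
pose lines m : {set F} := [set f | is_line x m (toP f)].
have card_lines : forall m, (m <= M0)%N -> #|lines m| = nb_lines x m.
  move=> m hm.
  pose S (r : 'I_d) := [set j : 'I_N | (j <= (if r == s m then 0 else x r m))%N].
  have -> : #|lines m| = #|@setXn _ (fun _ => 'I_N) S|.
    apply: eq_card => f; rewrite inE in_setXn /is_line; apply: eq_forallb => r.
    rewrite es ffunE inE; case: ifP => //; by rewrite leqn0.
  rewrite cardsXn /nb_lines [RHS]big_mkcond /=; apply: eq_bigr => r _.
  rewrite card_le_ord; last by case: ifP => // _; exact: hxN.
  by rewrite (es m r); case: ifP.
pose LsF m : {set F} := [set f | toP f \in Ls m].
have LsF_sub : forall m, (1 <= m)%N -> LsF m \subset lines m.
  move=> m hm; apply/subsetP=> f; rewrite !inE => hf; exact: (allP (hLlines m hm) _ hf).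
have card_LsF : forall m, (1 <= m <= M0)%N -> #|LsF m| = size (Ls m).
  move=> m /andP[hm1 hm2]; rewrite cardE -(size_map toP); apply: perm_size.
  apply: uniq_perm.
  - by rewrite map_inj_uniq //; exact: enum_uniq.
  - exact: hLuniq.
  move=> p; apply/mapP/idP => [[f hf ->]|hp]; first by rewrite mem_enum inE in hf.
  have ep : toP [ffun r => inord (p r) : 'I_N] = p.
    apply/ffunP => r; rewrite !ffunE inordK //.
    have := forallP (allP (hLlines m hm1) p hp) r; case: ifP => _; first by move/eqP->.
    move=> h; exact: (leq_ltn_trans h (hxN m r hm2)).
  by exists [ffun r => inord (p r) : 'I_N]; rewrite // mem_enum inE ep.
pose agree m (c b : F) := [forall r, (r == s m) || (r == s m.+1) || (c r == b r)].
pose G := fix G m := if m is m'.+1 then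
   [set b in LsF m'.+1 | (m' == 0%N) || [exists c in G m', agree m' c b]] else [set: F].
have G_sub : forall m, (1 <= m)%N -> G m \subset LsF m.
  by case=> // m _; apply/subsetP=> f; rewrite /= inE => /andP[].
have nb_pos : forall m, (0 < nb_lines x m)%N.
  by move=> m; apply: prodn_cond_gt0.
have step : forall m, (1 <= m)%N -> (m < M0)%N ->
  (#|G m| * nb_lines x m.+1 <=
   #|[set b in lines m.+1 | [exists c in G m, agree m c b]]| * nb_lines x m)%N.
  move=> m hm hmM.
  have hs12 := hsn m hm.
  set s1 := s m in hs12 *; set s2 := s m.+1 in hs12 *.
  have hs21 : (s2 == s1) = false by rewrite eq_sym.
  have Gl : forall f, f \in G m -> forall r, if r == s1 then nat_of_ord (f r) == 0%N
      else (f r <= x r m)%N.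
    move=> f /(subsetP (G_sub m hm)) /(subsetP (LsF_sub m hm)); rewrite inE.
    by move=> /forallP hf r; have := hf r; rewrite es ffunE.
  pose proj (f : F) : F := [ffun r => if (r == s1) || (r == s2) then ord0 else f r].
  set T := proj @: G m.
  set H := [set b in lines m.+1 | [exists c in G m, agree m c b]].
  have ha : (#|G m| <= #|T| * (x s2 m).+1)%N.
    pose g1 (f : F) := (proj f, inord (f s2) : 'I_(x s2 m).+1).
    have inj1 : {in G m &, injective g1}.
      move=> f1 f2 h1 h2 [] /ffunP e1 /(congr1 val) e2.
      apply/ffunP=> r; apply: ord_inj.
      have := Gl _ h1 r; have := Gl _ h2 r; have := e1 r; rewrite !ffunE.
      case: (eqVneq r s1) => [-> _ /eqP -> /eqP -> //|rn1] /=.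
      case: (eqVneq r s2) => [-> _ hf2 hf1|rn2 /= -> //].
      by move: e2; rewrite /= !inordK.
    have -> : (#|T| * (x s2 m).+1 = #|setX T [set: 'I_(x s2 m).+1]|)%N.
      by rewrite cardsX cardsT card_ord.
    rewrite -(card_in_imset inj1).
    apply: subset_leq_card; apply/subsetP=> p /imsetP[f hf ->].
    by rewrite /g1 in_setX in_setT andbT; apply: imset_f.
  have hb : (#|T| * (x s1 m.+1).+1 <= #|H|)%N.
    pose h1 (tj : F * 'I_(x s1 m.+1).+1) : F :=
      [ffun r => if r == s1 then inord tj.2 else tj.1 r].
    have hxs1 : (x s1 m.+1 < N)%N by apply: hxN.
    have Ts1 : forall t, t \in T -> t s1 = ord0.
      by move=> t /imsetP[f _ ->]; rewrite ffunE eqxx.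
    have inj2 : {in setX T [set: 'I_(x s1 m.+1).+1] &, injective h1}.
      move=> [t1 j1] [t2 j2]; rewrite !inE /= !andbT => /Ts1 e1 /Ts1 e2 /ffunP e.
      have ej : j1 = j2.
        apply: ord_inj; have := e s1; rewrite !ffunE eqxx /= => /(congr1 (@nat_of_ord _)).
        by rewrite !inordK // (leq_trans (ltn_ord _)) // ltnW.
      congr (_, _) => //; apply/ffunP=> r; have := e r; rewrite !ffunE.
      by case: (eqVneq r s1) => [->|//]; rewrite e1 e2.
    have -> : (#|T| * (x s1 m.+1).+1 = #|setX T [set: 'I_(x s1 m.+1).+1]|)%N.
      by rewrite cardsX cardsT card_ord.
    rewrite -(card_in_imset inj2).
    apply: subset_leq_card; apply/subsetP=> p /imsetP[[t j] + ->].
    rewrite in_setX in_setT andbT => /imsetP[f hf ->]; rewrite inE; apply/andP; split.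
      rewrite inE; apply/forallP=> r; rewrite es -/s2 !ffunE.
      case: (eqVneq r s2) => [->|rn2]; first by rewrite hs21 /= eqxx.
      case: (eqVneq r s1) => [->|rn1] /=; first by rewrite ?eqxx /= inordK; [exact: ltn_ord j|exact: leq_trans (ltn_ord j) hxs1].
      rewrite (x_step _ _ hxmono hxstrict m r rn2).
      by have := Gl _ hf r; rewrite (negbTE rn1).
    apply/existsP; exists f; rewrite hf /=; apply/forallP=> r; rewrite !ffunE.
    case: (eqVneq r s1) => //= rn1; case: (eqVneq r s2) => //= rn2.
  pose P := (\prod_(r < d | (r != s1) && (r != s2)) (x r m).+1)%N.
  have n1E : nb_lines x m = ((x s2 m).+1 * P)%N.
    rewrite /nb_lines (bigD1 s2) /=; last exact: negbT hs21.
    congr (_ * _)%N; apply: eq_bigl => r; by rewrite es.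
  have n2E : nb_lines x m.+1 = ((x s1 m.+1).+1 * P)%N.
    rewrite /nb_lines (bigD1 s1) /=; last exact: negbT hs12.
    congr (_ * _)%N; rewrite /P; apply: eq_big => r; first by rewrite es andbC.
    by move=> /andP[rn2 _]; rewrite (x_step _ _ hxmono hxstrict m r rn2).
  rewrite n1E n2E.
  apply: (@leq_trans (#|T| * (x s2 m).+1 * ((x s1 m.+1).+1 * P))%N).
    exact: leq_mul ha (leqnn _).
  by rewrite mulnACA; exact: leq_mul hb (leqnn _).
have dens : forall m, (1 <= m <= M0)%N ->
  (1 - \sum_(1 <= j < m.+1) (A j)^-1) * (nb_lines x m)%:R <= #|G m|%:R :> R.
  elim=> [//|m IH] /andP[hm1 hm2].
  have [m0|mpos] := posnP m.
    subst m; rewrite big_nat1.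
    have -> : G 1%N = LsF 1%N by apply/setP=> b; rewrite /= inE /= andbT.
    by rewrite card_LsF //; exact: hLcard.
  have hmM : (m < M0)%N by exact: hm2.
  have IH' := IH (introT andP (conj mpos (ltnW hmM))).
  rewrite big_nat_recr /=; last exact: ltnW.
  set H := [set b in lines m.+1 | [exists c in G m, agree m c b]].
  have eG : G m.+1 = H :&: LsF m.+1.
    apply/setP=> b; rewrite /= !inE (negbTE (lt0n_neq0 mpos)) /=.
    case hb: (toP b \in Ls m.+1); last by rewrite !andbF.
    by rewrite andbT (allP (hLlines m.+1 (ltn0Sn m)) _ hb).
  have hU : (#|H :|: LsF m.+1| <= nb_lines x m.+1)%N.
    rewrite -card_lines //; apply: subset_leq_card; rewrite subUset LsF_sub // andbT.
    by apply/subsetP=> b; rewrite inE => /andP[].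
  have hUI := cardsUI H (LsF m.+1).
  have hst := step m mpos hmM.
  have hL := hLcard m.+1 (ltn0Sn m).
  rewrite -card_LsF in hL; last by rewrite hm2.
  have -> : #|[set b in LsF m.+1 | (m == 0%N) || [exists c in G m, agree m c b]]| = #|H :&: LsF m.+1| by rewrite -eG.
  move: hU hUI hst hL IH'.
  set g := #|G m|; set h := #|H|; set l := #|LsF m.+1|; set u := #|H :|: LsF m.+1|;
    set i := #|H :&: LsF m.+1|; set n1 := nb_lines x m; set n2 := nb_lines x m.+1.
  set S := \sum_(1 <= j < m.+1) (A j)^-1; set a := (A m.+1)^-1.
  move=> hU hUI hst hL IH'.
  have hU' : u%:R <= n2%:R :> R by rewrite ler_nat.
  have hUI' : u%:R + i%:R = h%:R + l%:R :> R by rewrite -!natrD hUI.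
  have hst' : g%:R * n2%:R <= h%:R * n1%:R :> R by rewrite -!natrM ler_nat.
  have n1p : 0 < n1%:R :> R by rewrite ltr0n; exact: nb_pos.
  have n2p : 0 <= n2%:R :> R by rewrite ler0n.
  have hh : (1 - S) * n2%:R <= h%:R :> R.
    rewrite -(ler_pM2r n1p).
    apply: le_trans hst'.
    rewrite mulrAC; apply: ler_wpM2r => //.
  lra.
have agree_on : forall m (c b : F), (1 <= m)%N -> c \in lines m -> b \in lines m.+1 ->
    agree m c b -> exists p, on_line x m.+1 (toP b) p && on_line x m (toP c) p.
  move=> m c b hm; rewrite !inE /is_line => /forallP hc /forallP hb /forallP ha.
  exists [ffun r => if r == s m then toP b r else toP c r].
  apply/andP; split; apply/forallP=> r; rewrite !ffunE !es.
  - have := hb r; have := hc r; have := ha r; rewrite !es !ffunE.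
    case: (eqVneq r (s m.+1)) => [->|rn].
      rewrite eq_sym hsn //= => _ hcr _.
      exact: (leq_trans hcr (hxmono m.+1 _ isT)).
    case: (eqVneq r (s m)) => //= _ /eqP -> //.
  - have := hb r; have := hc r; rewrite !es !ffunE.
    case: (eqVneq r (s m)) => [->|rn //] => _ hbr.
    idtac.
    move: hbr; rewrite hsn // => hbr.
    by rewrite -(x_step _ _ hxmono hxstrict) //; rewrite es hsn.
have chain : forall m, (1 <= m <= M0)%N -> forall b, b \in G m ->
  exists L : nat -> point d, L m = toP b /\ (forall j, (1 <= j <= m)%N -> L j \in Ls j) /\
    (forall j : nat, (1 <= j)%N -> (j < m)%N ->
       exists p : point d, on_line x j.+1 (L j.+1) p && on_line x j (L j) p).
  elim=> [//|m IH] hm b hb.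
  have hbL : b \in LsF m.+1 by move: hb; rewrite /= inE => /andP[].
  case: (posnP m) => [m0|mpos].
    subst m; exists (fun _ => toP b); split=> //; split.
      move=> j /andP[h1 h2]; have -> : j = 1%N by apply/eqP; rewrite eqn_leq h2 h1.
      by move: hbL; rewrite inE.
    by move=> j h1 h2; lia.
  move: hb; rewrite /= inE => /andP[_]; rewrite (negbTE (lt0n_neq0 mpos)) /=.
  case/existsP=> c /andP[hc hcb].
  have hm' : (1 <= m <= M0)%N by case/andP: hm => _ h; rewrite mpos; lia.
  have [L' [hL'm [hL'1 hL'2]]] := IH hm' c hc.
  exists (fun j => if j == m.+1 then toP b else L' j); split; first by rewrite eqxx.
  split.
    move=> j /andP[hj1 hj2]; case: (eqVneq j m.+1) => [->|hjn]; first by move: hbL; rewrite inE.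
    by apply: hL'1; rewrite hj1 /=; move/eqP: hjn; lia.
  move=> j h1 h2; case: (eqVneq j m) => [->|hjn].
    rewrite eqxx (_ : (m == m.+1) = false); last by lia.
    rewrite hL'm; apply: agree_on => //.
      by move: (subsetP (LsF_sub m mpos)) => -> //; move: (subsetP (G_sub m mpos)) => ->.
    by move: (subsetP (LsF_sub m.+1 (ltn0Sn m))) => -> //.
  rewrite (_ : (j.+1 == m.+1) = false); last by move/eqP: hjn; lia.
  rewrite (_ : (j == m.+1) = false); last by lia.
  by apply: hL'2 => //; move/eqP: hjn; lia.
have [M00|M0pos] := posnP M0.
  by exists (fun _ => [ffun _ => 0%N]); split=> m; [case/andP=> h1 h2; lia|move=> h1 h2; lia].
have hM : (1 <= M0 <= M0)%N by rewrite M0pos leqnn.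
have := dens _ hM.
have hpos : 0 < (1 - \sum_(1 <= j < M0.+1) (A j)^-1) * (nb_lines x M0)%:R :> R.
  by apply: mulr_gt0; [rewrite subr_gt0|rewrite ltr0n].
move=> /(lt_le_trans hpos); rewrite ltr0n card_gt0 => /set0Pn[b hb].
have [L [_ [hL1 hL2]]] := chain _ hM b hb.
by exists L; split.
Qed.
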